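(* Let ${\mathcal B}$ be a finite family of nonzero elements of $L$. Then ${\mathcal B}$ is $w_S$-semi-reduced if and only if the family $\big(\operatorname{sred}^{w_S(b)}_S(b)\big)_{b\in{\mathcal B}}$ is linearly independent over $k_\mathfrak p$.
   Context: Let $A$ be a Dedekind domain with fraction field $K$, $\mathfrak p$ a nonzero prime ideal with valuation $v_\mathfrak p$, $\pi\in\mathfrak p$ with $v_\mathfrak p(\pi)=1$, $k_\mathfrak p=A/\mathfrak p$. Let $f\in A[x]$ be monic irreducible separable, $\theta$ a root, $L=K(\theta)$, $\mathcal O$ the integral closure of $A$ in $L$, $S=\{\mathfrak P_1,\dots,\mathfrak P_s\}$ the primes of $\mathcal O$ over $\mathfrak p$ with ramification indices $e_i$, normalized valuations $v_{\mathfrak P_i}$, valuation rings $\mathcal O_{(\mathfrak P_i)}$; $w_{\mathfrak P_i}=v_{\mathfrak P_i}/e_i$, $w_S(z)=\min_iw_{\mathfrak P_i}(z)$. For $r\in\mathbb Q$ and $z\in L$ with $w_{\mathfrak P_i}(z)\ge\lfloor r\rfloor$, $\operatorname{sred}^r_{\mathfrak P_i}(z)$ is the class of $\pi^{-\lfloor r\rfloor}z$ in the $k_\mathfrak p$-vector space $\mathcal O_{(\mathfrak P_i)}/\pi\mathcal O_{(\mathfrak P_i)}$ (which the paper identifies with $k_{\mathfrak P_i}^{e_i}$ via the first $e_i$ $\pi_{\mathfrak P_i}$-adic digits), and for $w_S(z)\ge\lfloor r\rfloor$, $\operatorname{sred}^r_S(z):=(\operatorname{sred}^r_{\mathfrak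 P_i}(z))_{1\le i\le s}\in\prod_i\mathcal O_{(\mathfrak P_i)}/\pi\mathcal O_{(\mathfrak P_i)}$. A finite family ${\mathcal B}\subset L$ is $w$-semi-reduced if $\lfloor w(\sum_b\lambda_bb)\rfloor=\min_b\lfloor w(\lambda_bb)\rfloor$ for all $\lambda_b\in K$. *)

(* Defs.v *)
From HB Require Import structures.
From mathcomp Require Import all_boot all_order all_algebra all_field.
Set Implicit Arguments. Unset Strict Implicit. Unset Printing Implicit Defensive.
Import Order.TTheory GRing.Theory Num.Theory.
Local Open Scope ring_scope.

(* A (discrete, Z-valued) valuation on a field F, given by its values on
   nonzero elements (the value at 0 is irrelevant; 0 has valuation +oo). *)
Definition is_dval (F : fieldType) (v : F -> int) : Prop :=
  (forall x y, x != 0 -> y != 0 -> v (x * y) = v x + v y) /\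
  (forall x y, x != 0 -> y != 0 -> x + y != 0 -> Num.min (v x) (v y) <= v (x + y)).

(* Extended values: None stands for +oo. *)
Definition omin (d : Order.disp_t) (T : orderType d) (x y : option T) : option T :=
  match x, y with
  | None, _ => y
  | _, None => x
  | Some a, Some b => Some (Order.min a b)
  end.

Section Setting.
Variables (K : fieldType) (L : fieldExtType K) (I : finType)
          (v : I -> L -> int) (e : I -> nat).

Definition wP (i : I) (z : L) : option rat :=
  if z == 0 then None else Some ((v i z)%:~R / (e i)%:R).

Definition wS (z : L) : option rat := \big[@omin _ _/None]_(i : I) wP i z.

Definition ofloor (x : option rat) : option int := omap (@Num.floor rat) x.

Definition semi_reduced (n : nat) (b : 'I_n -> L) : Prop :=
  forall lam : 'I_n -> K,
    ofloor (wS (\sum_(j < n) lam j *: b j))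
    = \big[@omin _ _/None]_(j < n) ofloor (wS (lam j *: b j)).

Definition flwS (z : L) : int := odflt 0 (ofloor (wS z)).

(* z lies in pi * O_(P_i), i.e. its class in O_(P_i)/pi O_(P_i) is zero
   (for v_{P_i}(pi) = e_i: v_{P_i}(z) >= e_i, or z = 0). *)
Definition in_piO (i : I) (z : L) : bool := (z == 0) || ((e i)%:Z <= v i z).

Variables (vp : K -> int) (pi : K).

(* lambda lies in the valuation ring A_p of v_p, resp. in its maximal ideal;
   k_p = A/p = A_p/pA_p. *)
Definition in_Ap (a : K) : bool := (a == 0) || (0 <= vp a).
Definition in_mp (a : K) : bool := (a == 0) || (0 < vp a).

(* The lift of sred^{w_S(z)}_S(z): pi^{-floor(w_S z)} z in prod_i O_(P_i). *)
Definition sred_lift (z : L) : L := (pi ^ (- flwS z)) *: z.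

(* The family (sred^{w_S(b_j)}_S(b_j))_j in prod_i O_(P_i)/pi O_(P_i) is
   k_p-linearly independent.  Written out: scalars of k_p are classes of
   lam in A_p (zero iff lam in p A_p), they act by ( [lam] . [z] = [lam z] ),
   and an element of the product is zero iff each component lies in pi O_(P_i). *)
Definition sred_free (n : nat) (b : 'I_n -> L) : Prop :=
  forall lam : 'I_n -> K,
    (forall j, in_Ap (lam j)) ->
    (forall i, in_piO i (\sum_(j < n) lam j *: sred_lift (b j))) ->
    forall j, in_mp (lam j).

End Setting.

(* Main.v *)
Require Import Defs.
From HB Require Import structures.
From mathcomp Require Import all_boot all_order all_algebra all_field.
From mathcomp Require Import ring lra zify.
Import Order.TTheory GRing.Theory Num.Theory.
Set Implicit Arguments. Unset Strict Implicit. Unset Printing Implicit Defensive.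
Local Open Scope ring_scope.
Definition le_o d (T : orderType d) (x y : option T) : bool :=
  match y, x with
  | None, _ => true
  | Some b, Some a => (a <= b)%O
  | Some _, None => false end.

Lemma le_o_trans d (T : orderType d) (x y z : option T) :
  le_o x y -> le_o y z -> le_o x z.
Proof.
case: x => [a|]; case: y => [b|]; case: z => [c|] //=.
exact: le_trans.
Qed.

Lemma le_o_anti d (T : orderType d) (x y : option T) :
  le_o x y -> le_o y x -> x = y.
Proof.
case: x => [a|]; case: y => [b|] //= h1 h2.
by congr Some; apply/eqP; rewrite eq_le h1 h2.
Qed.

Lemma le_o_refl d (T : orderType d) (x : option T) : le_o x x.
Proof. by case: x => //= a. Qed.

Lemma le_o_total d (T : orderType d) (x y : option T) : le_o x y || le_o y x.
Proof. case: x => [a|]; case: y => [b|] //=; exact: le_total. Qed.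

Lemma le_omin d (T : orderType d) (c x y : option T) :
  le_o c (omin x y) = le_o c x && le_o c y.
Proof.
case: x => [a|]; case: y => [b|]; case: c => [c|] //=; rewrite ?andbT //.
by rewrite Order.TotalTheory.le_min.
Qed.

Lemma omin_cases d (T : orderType d) (x y : option T) :
  omin x y = x \/ omin x y = y.
Proof.
case: x => [a|]; case: y => [b|] /=; try by [left|right].
by have [h|h] := leP a b; [left|right].
Qed.

Lemma le_bigomin d (T : orderType d) (I : eqType) (r : seq I) (F : I -> option T) c :
  le_o c (\big[@omin _ _/None]_(i <- r) F i) = all (fun i => le_o c (F i)) r.
Proof.
elim: r => [|a r IH]; first by rewrite big_nil; case: c.
by rewrite big_cons le_omin IH.
Qed.

Lemma bigomin_attained d (T : orderType d) (I : eqType) (r : seq I) (F : I -> option T) :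
  \big[@omin _ _/None]_(i <- r) F i = None \/
  exists2 i, i \in r & \big[@omin _ _/None]_(i <- r) F i = F i.
Proof.
elim: r => [|a r IH]; first by left; rewrite big_nil.
rewrite big_cons.
case: (omin_cases (F a) (\big[@omin _ _/None]_(i <- r) F i)) => ->.
  by right; exists a => //; rewrite mem_head.
case: IH => [->|[i ir ->]]; first by left.
by right; exists i => //; rewrite in_cons ir orbT.
Qed.

Lemma omap_omin d (T : orderType d) d' (T' : orderType d') (f : T -> T') :
  {homo f : x y / (x <= y)%O} ->
  {morph omap f : x y / omin x y >-> omin x y}.
Proof.
move=> hf [a|] [b|] //=; congr Some.
have [h|h] := leP a b.
  by rewrite Order.POrderTheory.min_l // hf.
by rewrite Order.POrderTheory.min_r // hf // ltW.
Qed.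

Lemma bigomin_le d (T : orderType d) (I : eqType) (r : seq I) (F : I -> option T) i :
  i \in r -> le_o (\big[@omin _ _/None]_(i <- r) F i) (F i).
Proof.
move=> ir; have := le_bigomin r F (\big[@omin _ _/None]_(i <- r) F i).
by rewrite le_o_refl => /esym/allP; apply.
Qed.
Lemma dval1 (F : fieldType) (w : F -> int) : is_dval w -> w 1 = 0.
Proof.
move=> [hM _]; have := hM 1 1 (oner_neq0 _) (oner_neq0 _).
rewrite mulr1 -{1}(addr0 (w 1)) => /addrI; done.
Qed.

Lemma dvalV (F : fieldType) (w : F -> int) x : is_dval w -> x != 0 -> w x^-1 = - w x.
Proof.
move=> hw hx; have := hw.1 x x^-1 hx (invr_neq0 hx).
rewrite mulfV // dval1 // => /eqP; rewrite eq_sym addr_eq0 => /eqP ->.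
by rewrite opprK.
Qed.

Lemma dval_expz (F : fieldType) (w : F -> int) p : is_dval w -> p != 0 -> w p = 1 ->
  forall k : int, w (p ^ k) = k.
Proof.
move=> hw hp h1.
have hn : forall n : nat, w (p ^+ n) = n.
  elim=> [|n IH]; first by rewrite expr0 dval1.
  by rewrite exprS hw.1 ?expf_neq0 // h1 IH -addn1 PoszD addrC.
case=> n; first by rewrite hn.
rewrite NegzE -exprnN dvalV ?expf_neq0 // hn.
by [].

Qed.

Lemma wP0 (K : fieldType) (L : fieldExtType K) (I : finType) (v : I -> L -> int) (e : I -> nat) i :
  wP v e i 0 = None.
Proof. by rewrite /wP eqxx. Qed.

Lemma wS0 (K : fieldType) (L : fieldExtType K) (I : finType) (v : I -> L -> int) (e : I -> nat) :
  wS v e 0 = None.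
Proof. by rewrite /wS; elim/big_rec: _ => // i x _ ->; rewrite wP0. Qed.

Lemma wP_scale (K : fieldType) (L : fieldExtType K) (I : finType) (v : I -> L -> int)
  (e : I -> nat) (vp : K -> int) :
  (forall i, is_dval (v i)) -> (forall i, (0 < e i)%N) ->
  (forall i (a : K), a != 0 -> v i (a%:A) = (e i)%:Z * vp a) ->
  forall i a z, a != 0 -> z != 0 ->
  wP v e i (a *: z) = omap (fun q => (vp a)%:~R + q) (wP v e i z).
Proof.
move=> hv he hK i a z ha hz.
rewrite /wP scaler_eq0 (negbTE ha) (negbTE hz) /=; congr Some.
rewrite -mulr_algl (hv i).1 ?hK // ?rmorph_eq0 //.
have he0 : ((e i)%:R : rat) != 0 by rewrite pnatr_eq0 -lt0n he.
rewrite intrD intrM.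
have -> : ((e i)%:Z)%:~R = (e i)%:R :> rat by [].

  by field.
by rewrite -[a%:A]/(a *: 1) scaler_eq0 oner_eq0 orbF.
Qed.

Lemma wS_scale (K : fieldType) (L : fieldExtType K) (I : finType) (v : I -> L -> int)
  (e : I -> nat) (vp : K -> int) :
  (forall i, is_dval (v i)) -> (forall i, (0 < e i)%N) ->
  (forall i (a : K), a != 0 -> v i (a%:A) = (e i)%:Z * vp a) ->
  forall a z, a != 0 -> z != 0 ->
  wS v e (a *: z) = omap (fun q => (vp a)%:~R + q) (wS v e z).
Proof.
move=> hv he hK a z ha hz; rewrite /wS.
pose f := fun q : rat => (vp a)%:~R + q.
have hf : {homo f : x y / (x <= y)%O} by move=> x y /=; rewrite /f lerD2l.
rewrite (@big_morph _ _ (omap f) None (@omin _ _) None (@omin _ _) (omap_omin hf) erefl).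
by apply: eq_bigr => i _; rewrite (wP_scale hv he hK).
Qed.

Lemma le_wS (K : fieldType) (L : fieldExtType K) (I : finType) (v : I -> L -> int)
  (e : I -> nat) c z :
  le_o c (wS v e z) = [forall i, le_o c (wP v e i z)].
Proof.
rewrite /wS le_bigomin; apply/allP/forallP => [h i|h i _].
  by apply: h; rewrite mem_index_enum.
exact: h.
Qed.

Lemma wS_some (K : fieldType) (L : fieldExtType K) (I : finType) (v : I -> L -> int)
  (e : I -> nat) z : (0 < #|I|)%N -> z != 0 -> exists q, wS v e z = Some q.
Proof.
move=> hI hz; case: (bigomin_attained (index_enum I) (fun i => wP v e i z)).
  move=> h; exfalso.
  have /card_gt0P [i _] := hI.
  have := le_o_refl (wS v e z); rewrite {1}/wS h le_wS => /forallP /(_ i).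
  by rewrite /wP (negbTE hz).
by move=> [i _ h]; rewrite /wS h /wP (negbTE hz); eexists.
Qed.

Lemma wS_add (K : fieldType) (L : fieldExtType K) (I : finType) (v : I -> L -> int)
  (e : I -> nat) : (forall i, is_dval (v i)) -> (forall i, (0 < e i)%N) ->
  forall c x y, le_o c (wS v e x) -> le_o c (wS v e y) -> le_o c (wS v e (x + y)).
Proof.
move=> hv he c x y; rewrite !le_wS => /forallP hx /forallP hy; apply/forallP => i.
have {hx hy} := (hx i, hy i).
have [->|x0] := eqVneq x 0; first by rewrite add0r => -[].
have [->|y0] := eqVneq y 0; first by rewrite addr0 => -[].
have [->|s0] := eqVneq (x + y) 0; first by rewrite wP0; case: c.
rewrite /wP (negbTE x0) (negbTE y0) (negbTE s0).
case: c => [r|] /= [h1 h2] //.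
have hm := (hv i).2 x y x0 y0 s0.
have hep : (0 : rat) < (e i)%:R by rewrite ltr0n.
move: hm; rewrite Order.TotalTheory.ge_min => /orP [] hm.
  by apply: le_trans h1 _; rewrite ler_pM2r ?invr_gt0 // ler_int.
by apply: le_trans h2 _; rewrite ler_pM2r ?invr_gt0 // ler_int.
Qed.

Lemma wS_sum (K : fieldType) (L : fieldExtType K) (I : finType) (v : I -> L -> int)
  (e : I -> nat) : (forall i, is_dval (v i)) -> (forall i, (0 < e i)%N) ->
  forall c n (F : 'I_n -> L), (forall j, le_o c (wS v e (F j))) ->
  le_o c (wS v e (\sum_(j < n) F j)).
Proof.
move=> hv he c n F h.
apply: (big_ind (fun z => le_o c (wS v e z))) => //.
  by rewrite wS0; clear h; case: c.
by move=> x y; apply: wS_add.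
Qed.

Lemma in_piO_wS (K : fieldType) (L : fieldExtType K) (I : finType) (v : I -> L -> int)
  (e : I -> nat) : (forall i, (0 < e i)%N) ->
  forall z, (forall i, in_piO v e i z) <-> le_o (Some 1) (wS v e z).
Proof.
move=> he z; rewrite le_wS; split => [h|/forallP h] .
  apply/forallP => i; have := h i; rewrite /in_piO /wP.
  case: eqP => //= _ hle.
  by rewrite ler_pdivlMr ?ltr0n // mul1r -[(e i)%:R]/(((e i)%:Z)%:~R) ler_int.
move=> i; have := h i; rewrite /in_piO /wP.
case: eqP => //= _ hle.
by move: hle; rewrite ler_pdivlMr ?ltr0n // mul1r -[(e i)%:R]/(((e i)%:Z)%:~R) ler_int.
Qed.

Lemma ofloor_le (x : option rat) (m : int) :
  le_o (Some m) (ofloor x) = le_o (Some (m%:~R : rat)) x.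
Proof. by case: x => //= q; rewrite floor_ge_int. Qed.

Lemma ofloor_scale (K : fieldType) (L : fieldExtType K) (I : finType) (v : I -> L -> int)
  (e : I -> nat) (vp : K -> int) :
  (0 < #|I|)%N ->
  (forall i, is_dval (v i)) -> (forall i, (0 < e i)%N) ->
  (forall i (a : K), a != 0 -> v i (a%:A) = (e i)%:Z * vp a) ->
  forall a z, a != 0 -> z != 0 ->
  ofloor (wS v e (a *: z)) = Some (vp a + flwS v e z).
Proof.
move=> hI hv he hK a z ha hz.
have [q hq] := wS_some v e hI hz.
rewrite (wS_scale hv he hK) // /flwS /ofloor hq /=; congr Some.
by rewrite floorDzr ?intr_int // intrKfloor.
Qed.

Unset Implicit Arguments.
Theorem mainTheorem7 (K : fieldType) (L : fieldExtType K)
    (vp : K -> int) (pi : K)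
    (I : finType) (v : I -> L -> int) (e : I -> nat)
    (n : nat) (b : 'I_n -> L) :
  is_dval vp -> pi != 0 -> vp pi = 1 ->
  (0 < #|I|)%N ->
  (forall i, is_dval (v i)) ->
  (forall i, (0 < e i)%N) ->
  (forall i (a : K), a != 0 -> v i (a%:A) = (e i)%:Z * vp a) ->
  (forall j, b j != 0) ->
  semi_reduced v e b <-> sred_free v e vp pi b.
Proof.
move=> hvp hpi0 hpi1 hI hv he hK hb; split.
- move=> hsr lam hAp hpiO j0.
  case: (boolP (in_mp vp (lam j0))) => // hn; exfalso.
  have l0 : lam j0 != 0 by move: hn; rewrite /in_mp; case: eqP.
  have vl0 : vp (lam j0) = 0.
    move: hn (hAp j0); rewrite /in_mp /in_Ap (negbTE l0) /= => hn h.
    by apply/eqP; rewrite eq_le h andbT leNgt.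
  pose mu j := lam j * pi ^ (- flwS v e (b j)).
  have := hsr mu.
  have -> : \sum_(j < n) mu j *: b j = \sum_(j < n) lam j *: sred_lift v e pi (b j).
    by apply: eq_bigr => j _; rewrite /sred_lift scalerA.
  move=> hS.
  have h1 : le_o (Some 1) (ofloor (wS v e (\sum_(j < n) lam j *: sred_lift v e pi (b j)))).
    by rewrite ofloor_le; apply/(in_piO_wS _ he).
  have mu0 : mu j0 != 0 by rewrite mulf_neq0 // expfz_neq0.
  have h2 := @bigomin_le _ _ _ (index_enum 'I_n) (fun j => ofloor (wS v e (mu j *: b j))) j0
     (mem_index_enum j0).
  rewrite -hS (ofloor_scale hI hv he hK) // in h2.
  have hv0 : vp (mu j0) + flwS v e (b j0) = 0.
    by rewrite hvp.1 ?expfz_neq0 // vl0 (dval_expz hvp) // add0r addNr.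
  by have := le_o_trans h1 h2; rewrite hv0.
- move=> hfree lam.
  set S := \sum_(j < n) lam j *: b j.
  set R := \big[@omin _ _/None]_(j < n) ofloor (wS v e (lam j *: b j)).
  have hle : forall j, le_o R (ofloor (wS v e (lam j *: b j))).
    by move=> j; apply: bigomin_le; rewrite mem_index_enum.
  apply: le_o_anti.
  + case: (bigomin_attained (index_enum 'I_n) (fun j => ofloor (wS v e (lam j *: b j))))
      => [hN|[j0 _ hj0]].
      by rewrite -/R in hN; rewrite hN; case: (ofloor _).
    rewrite -/R in hj0.
    have [l0|l0] := eqVneq (lam j0) 0.
      by rewrite hj0 l0 scale0r wS0; case: (ofloor _).
    rewrite (ofloor_scale hI hv he hK) // in hj0.
    set m := vp (lam j0) + flwS v e (b j0) in hj0.
    rewrite hj0.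
    case: (boolP (le_o (ofloor (wS v e S)) (Some m))) => // hnot; exfalso.
    have hm1 : le_o (Some ((m + 1)%:~R : rat)) (wS v e S).
      move: hnot; case: (wS v e S) => //= q hq.
      by rewrite -floor_ge_int lezD1 ltNge.
    pose alpha j := lam j * pi ^ (flwS v e (b j) - m).
    have hA : forall j, in_Ap vp (alpha j).
      move=> j; rewrite /in_Ap; have [lj|lj] := eqVneq (lam j) 0.
        by rewrite /alpha lj mul0r eqxx.
      apply/orP; right; rewrite hvp.1 ?expfz_neq0 // (dval_expz hvp) //.
      have := hle j; rewrite hj0 (ofloor_scale hI hv he hK) //= => h.
      lia.
    have hsum : \sum_(j < n) alpha j *: sred_lift v e pi (b j) = pi ^ (- m) *: S.
      rewrite /S scaler_sumr; apply: eq_bigr => j _; rewrite /sred_lift !scalerA.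
      congr (_ *: _); rewrite /alpha -mulrA -exprzDr ?unitfE //.
      have -> : flwS v e (b j) - m + - flwS v e (b j) = - m by lia.
      by rewrite mulrC.
    have hpiO : forall i, in_piO v e i (\sum_(j < n) alpha j *: sred_lift v e pi (b j)).
      apply/(in_piO_wS _ he); rewrite hsum.
      have [->|S0] := eqVneq S 0; first by rewrite scaler0 wS0.
      rewrite (wS_scale hv he hK) ?expfz_neq0 // (dval_expz hvp) //.
      move: hm1; case: (wS v e S) => //= q hq.
      rewrite intrN; rewrite intrD in hq; lra.
    have := hfree alpha hA hpiO j0; rewrite /in_mp /alpha (negbTE (mulf_neq0 l0 (expfz_neq0 _ hpi0))) /=.
    rewrite hvp.1 ?expfz_neq0 // (dval_expz hvp) // /m; lia.
  + case hR: R => [m|].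
      rewrite ofloor_le; apply: (wS_sum hv he) => j.
      by rewrite -ofloor_le -hR.
    have hz : forall j, lam j *: b j = 0.
      move=> j; have := hle j; rewrite hR.
      have [//|hz] := eqVneq (lam j *: b j) 0.
      by have [q ->] := wS_some v e hI hz.
    by rewrite /S big1 // wS0.
Qed.
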